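(* Let $\Gamma$ be a finite vertex-transitive graph and suppose $S$ is a $k$-extended irregular dominating set of $\Gamma$. Then $S$ is optimal and $k=\gamma_e(\Gamma)=\mathrm{diam}(\Gamma)+1$. Moreover, the labels of the $k$ vertices of $S$ are exactly all the elements of $\{0,1,\dots,\mathrm{diam}(\Gamma)\}$.
   Context: Let $\Gamma=(V,E)$ be a finite simple undirected graph with graph distance $d$; $\mathrm{diam}(\Gamma)$ is the largest distance between two vertices. A vertex $v$ carrying a non-negative integer label $\ell$ dominates (covers) exactly the vertices $u$ with $d(u,v)=\ell$; a vertex labeled $0$ dominates only itself. For $k\ge0$, a $k$-extended irregular dominating set is a set $S\subseteq V$ of $k$ vertices together with a labeling $\lambda:S\to\mathbb{Z}_{\ge 0}$ with distinct labels on distinct vertices, such that every vertex of $V$ is dominated by at least one vertex of $S$; it is assumed that some vertex of $S$ has label $0$. The extended irregular domination number $\gamma_e(\Gamma)$ is the minimum cardinality of an extended irregular dominating set of $\Gamma$; a $k$-extended irregular dominating set is optimal if $k=\gamma_e(\Gamma)$. *)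

(* Defs.v *)
From mathcomp Require Import all_boot.
From mathcomp Require Import fingroup perm.

Set Implicit Arguments.
Unset Strict Implicit.
Unset Printing Implicit Defensive.

Section Graph.
Variable T : finType.

Definition simple_graph (e : rel T) : Prop := symmetric e /\ irreflexive e.

Definition walkb (e : rel T) (x y : T) (n : nat) : bool :=
  [exists p : n.-tuple T, path e x p && (last x p == y)].

(* graph distance: least n admitting a walk of length n from x to y
   (searching n < #|T|; returns #|T| if y is unreachable, which never
   happens in a connected graph) *)
Definition gdist (e : rel T) (x y : T) : nat :=
  find (walkb e x y) (iota 0 #|T|).

Definition connected_graph (e : rel T) : Prop := forall x y, connect e x y.

Definition diam (e : rel T) : nat := \max_(x : T) \max_(y : T) gdist e x y.

Definition vertex_transitive (e : rel T) : Prop :=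
  forall x y : T, exists f : {perm T},
    (forall u v, e (f u) (f v) = e u v) /\ f x = y.

Definition dominates (e : rel T) (lab : T -> nat) (v u : T) : bool :=
  gdist e u v == lab v.

Definition ext_irr_dom (e : rel T) (S : {set T}) (lab : T -> nat) : Prop :=
  {in S &, injective lab} /\
  (forall u : T, exists2 v, v \in S & dominates e lab v u) /\
  (exists2 v, v \in S & lab v = 0).

Definition k_ext_irr_dom (e : rel T) (k : nat) (S : {set T}) (lab : T -> nat)
  : Prop := ext_irr_dom e S lab /\ #|S| = k.

Definition is_gamma_e (e : rel T) (g : nat) : Prop :=
  (exists (S : {set T}) (lab : T -> nat), k_ext_irr_dom e g S lab) /\
  (forall (S : {set T}) (lab : T -> nat), ext_irr_dom e S lab -> g <= #|S|).

End Graph.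

(* Main.v *)
Require Import Defs.
From mathcomp Require Import all_boot.
From mathcomp Require Import fingroup perm zify.

Set Implicit Arguments.
Unset Strict Implicit.
Unset Printing Implicit Defensive.

Section Aux.
Variable T : finType.
Variable e : rel T.

Lemma walkP x y n :
  reflect (exists p : seq T, [/\ size p = n, path e x p & last x p = y])
          (walkb e x y n).
Proof.
apply: (iffP existsP) => [[p /andP[hp /eqP hl]]|[p [hs hp hl]]].
  by exists (tval p); rewrite size_tuple.
have hs' : size p == n by rewrite hs.
by exists (Tuple hs'); rewrite /= hp hl eqxx.
Qed.

Lemma walk_cat x y z a b :
  walkb e x y a -> walkb e y z b -> walkb e x z (a + b).
Proof.
move=> /walkP[p [sp pp lp]] /walkP[q [sq pq lq]]; apply/walkP.
exists (p ++ q); rewrite size_cat cat_path last_cat lp pp pq sp sq.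
by [].
Qed.

Lemma walk_split x y m j :
  walkb e x y m -> j <= m -> exists w, walkb e x w j /\ walkb e w y (m - j).
Proof.
move=> /walkP[p [sp pp lp]] hj.
exists (last x (take j p)); split; apply/walkP.
  exists (take j p); split => //; first by rewrite size_takel // sp.
  by move: pp; rewrite -{1}(cat_take_drop j p) cat_path => /andP[].
exists (drop j p); split; first by rewrite size_drop sp.
  by move: pp; rewrite -{1}(cat_take_drop j p) cat_path => /andP[].
by rewrite -lp -{3}(cat_take_drop j p) last_cat.
Qed.

Lemma gdist_le x y m : walkb e x y m -> m < #|T| -> gdist e x y <= m.
Proof.
move=> hw hm; rewrite leqNgt; apply/negP => hlt.
have := before_find 0 hlt; rewrite nth_iota // add0n hw //.
Qed.

Lemma gdist_walk x y m : walkb e x y m -> m < #|T| ->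
  gdist e x y < #|T| /\ walkb e x y (gdist e x y).
Proof.
move=> hw hm.
have hh : has (walkb e x y) (iota 0 #|T|).
  by apply/hasP; exists m => //; rewrite mem_iota.
have := hh; rewrite has_find size_iota => hf; split => //.
by have := nth_find 0 hh; rewrite nth_iota // add0n.
Qed.

Lemma gdist_min x y j : j < gdist e x y -> ~~ walkb e x y j.
Proof.
move=> hj; have hn : j < #|T|.
  by apply: leq_trans hj _; have := find_size (walkb e x y) (iota 0 #|T|);
     rewrite size_iota.
by have := before_find 0 hj; rewrite nth_iota // add0n => ->.
Qed.

Lemma connect_walk x y : connect e x y -> exists2 m, m < #|T| & walkb e x y m.
Proof.
move=> /connectP[p hp ->]; case: (shortenP hp) => p' hp' hu _.
exists (size p'); last by apply/walkP; exists p'.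
have := max_card (mem (x :: p')); rewrite (card_uniqP hu) /=.
by [].
Qed.

Lemma walk_hom (f : T -> T) x y m :
  (forall u v, e (f u) (f v) = e u v) -> walkb e x y m -> walkb e (f x) (f y) m.
Proof.
move=> hf /walkP[p [sp pp lp]]; apply/walkP; exists (map f p).
rewrite size_map path_map last_map lp; split => //.
by rewrite (eq_path (e' := e)) // => u v; rewrite /= hf.
Qed.

Lemma gdist_hom (f : {perm T}) x y :
  (forall u v, e (f u) (f v) = e u v) -> gdist e (f x) (f y) = gdist e x y.
Proof.
move=> hf; apply: eq_find => m; apply/idP/idP; last exact: walk_hom.
have hfi : forall u v, e ((f^-1)%g u) ((f^-1)%g v) = e u v.
  by move=> u v; rewrite -hf !permKV.
by move=> /(walk_hom hfi); rewrite !permK.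
Qed.

Definition N x l := #|[set u | gdist e u x == l]|.

Lemma N_trans x y l : vertex_transitive e -> N x l = N y l.
Proof.
move=> vt; case: (vt y x) => f [hf hfx].
rewrite /N -(card_preimset _ (@perm_inj _ f)); apply: eq_card => u.
by rewrite !inE -hfx gdist_hom.
Qed.

Lemma gdist_le_diam u v : gdist e u v <= diam e.
Proof.
rewrite /diam; apply: leq_trans (leq_bigmax u).
exact: (leq_bigmax (F := fun y => gdist e u y) v).
Qed.

End Aux.

Section Main.
Variable T : finType.
Variable e : rel T.
Hypothesis conn : connected_graph e.
Hypothesis vt : vertex_transitive e.

Local Notation D := (diam e).

Lemma diam_lt (x0 : T) : D < #|T| /\ exists a b, gdist e a b = D.
Proof.
have h0 : 0 < #|T| by apply/card_gt0P; exists x0.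
case: (eq_bigmax (fun x => \max_y gdist e x y) h0) => a ha.
have [b hb] := eq_bigmax (fun y => gdist e a y) h0.
have hD : D = gdist e a b by rewrite /diam ha hb.
have [m hm hw] := connect_walk (conn a b).
split; last by exists a, b.
by rewrite hD; case: (gdist_walk hw hm).
Qed.

Lemma N_pos (x0 : T) l : l <= D -> 0 < N e x0 l.
Proof.
move=> hl; have [hDn [a [b hab]]] := diam_lt x0.
rewrite (N_trans x0 b l vt).
have [m hm hw] := connect_walk (conn a b).
have [_ hwD] := gdist_walk hw hm; rewrite hab in hwD.
have [w [h1 h2]] := walk_split hwD (leq_subr l D).
rewrite subKn // in h2.
apply/card_gt0P; exists w; rewrite inE.
have hln : l < #|T| by apply: leq_ltn_trans hDn.
rewrite eqn_leq gdist_le //=; rewrite leqNgt; apply/negP => hlt.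
have [_ hg] := gdist_walk h2 hln.
have := walk_cat h1 hg.
have : D - l + gdist e w b < gdist e a b.
  by rewrite hab; move: hlt hl; clear; lia.
by move=> /gdist_min /negP.
Qed.

Lemma partition_N (b : T) : \sum_(i < D.+1) N e b i = #|T|.
Proof.
rewrite -sum1_card.
rewrite (partition_big (fun u => (inord (gdist e u b) : 'I_D.+1)) predT) //=.
apply: eq_bigr => i _; rewrite sum1_card /N; apply: eq_card => u.
rewrite !inE /=; apply/eqP/eqP => [<-|hu].
  by rewrite inordK // ltnS gdist_le_diam.
by rewrite -hu inordK // ltnS gdist_le_diam.
Qed.

Lemma cover_main (S : {set T}) (lab : T -> nat) :
  {in S &, injective lab} -> (forall v, v \in S -> lab v <= D) ->
  (forall u, exists2 v, v \in S & dominates e lab v u) ->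
  forall x0 : T,
  #|S| = D.+1 /\ (forall l, l <= D -> exists2 v, v \in S & lab v = l).
Proof.
move=> inj bnd cov x0.
pose labo v : 'I_D.+1 := inord (lab v).
have labok v : v \in S -> (labo v : nat) = lab v.
  by move=> hv; rewrite /labo inordK // ltnS bnd.
have injo : {in S &, injective labo}.
  by move=> u v hu hv huv; apply: inj => //; rewrite -labok // -(labok v) // huv.
have hA : labo @: S = [set: 'I_D.+1].
  apply/eqP; rewrite eqEsubset subsetT /=; apply/subsetP => i0 _.
  apply/negPn/negP => hi0.
  have h1 : #|T| <= \sum_(v in S) N e v (lab v).
    rewrite -sum1_card.
    have -> : \sum_(v in S) N e v (lab v) =
              \sum_(v in S) \sum_(u : T) (gdist e u v == lab v).
      apply: eq_bigr => v _; rewrite /N -sum1_card big_mkcond /=.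
      by apply: eq_bigr => u _; rewrite inE; case: (_ == _).
    rewrite exchange_big /=; apply: leq_sum => u _.
    have [v hv hd] := cov u.
    by rewrite (bigD1 v) //= -[1]addn0 leq_add // lt0b.
  have h2 : \sum_(v in S) N e v (lab v) = \sum_(i in labo @: S) N e x0 i.
    rewrite big_imset //=; apply: eq_bigr => v hv.
    by rewrite labok // (N_trans v x0 _ vt).
  have h3 := partition_N x0.
  rewrite (bigID (fun i => i \in labo @: S)) /= in h3.
  have h4 : N e x0 i0 <= \sum_(i < D.+1 | i \notin labo @: S) N e x0 i.
    by rewrite (bigD1 i0) //= leq_addr.
  have hp := N_pos x0 (ltnSE (ltn_ord i0)).
  move: h1 h3; rewrite h2 => h1 h3.
  rewrite -h3 in h1; move: h1 hp h4; set s1 := \sum_(i in _) _; set s2 := \sum_(i < D.+1 | _) _; set n0 := N e x0 i0; clear; lia.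
split.
  by rewrite -(card_in_imset injo) hA cardsT card_ord.
move=> l hl; have : (inord l : 'I_D.+1) \in labo @: S by rewrite hA inE.
case/imsetP => v hv hlv; exists v => //.
by rewrite -labok // -hlv inordK.
Qed.

End Main.

Theorem corollary2p6 (T : finType) (e : rel T) (k : nat)
    (S : {set T}) (lab : T -> nat) :
  simple_graph e -> connected_graph e -> vertex_transitive e ->
  k_ext_irr_dom e k S lab ->
  (forall v, v \in S -> lab v <= diam e) ->
  [/\ is_gamma_e e k,
      k = (diam e).+1,
      (forall v, v \in S -> lab v <= diam e) &
      (forall l, l <= diam e -> exists2 v, v \in S & lab v = l)].
Proof.
move=> _ conn vt [[inj [cov [x0 hx0 hl0]]] hk] bnd.
have [hS hl] := cover_main conn vt inj bnd cov x0.
have hkD : k = (diam e).+1 by rewrite -hk hS.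
split => //.
split.
  exists S, lab; split; [split; [exact: inj | split; [exact: cov | exact: (ex_intro2 _ _ x0 hx0 hl0)]] | exact: hk].
move=> S' lab' [inj' [cov' _]].
pose S'' := [set v in S' | lab' v <= diam e].
have inj'' : {in S'' &, injective lab'}.
  by move=> u v; rewrite !inE => /andP[hu _] /andP[hv _]; apply: inj'.
have bnd'' : forall v, v \in S'' -> lab' v <= diam e.
  by move=> v; rewrite inE => /andP[].
have cov'' : forall u, exists2 v, v \in S'' & dominates e lab' v u.
  move=> u; have [v hv hd] := cov' u; exists v => //.
  rewrite inE hv /=; move: hd; rewrite /dominates => /eqP <-.
  exact: gdist_le_diam.
have [h _] := cover_main conn vt inj'' bnd'' cov'' x0.
rewrite hkD -h; apply: subset_leq_card; apply/subsetP => v.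
by rewrite inE => /andP[].
Qed.
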